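(* Let $R$ be a commutative ring with identity. If $\gamma_t(\Gamma(R))=3$, then $\gamma(\Gamma(R))=3$.
   Context: All rings are commutative with identity. The zero-divisor graph $\Gamma(R)$ has vertex set $Z(R)^*$ (nonzero zero-divisors); distinct $r,s$ are adjacent iff $rs=0$, and $x$ is adjacent to itself iff $x^2=0$. A dominating set is $X\subseteq Z(R)^*$ such that every vertex not in $X$ is adjacent to some element of $X$; a total dominating set is $X$ such that every vertex (including those in $X$) is adjacent to some element of $X$ (self-adjacency counts). $\gamma,\gamma_t$ are the respective minimum cardinalities. *)

(* Defs.v *)
From mathcomp Require Import all_boot all_algebra.
Set Implicit Arguments. Unset Strict Implicit. Unset Printing Implicit Defensive.
Import GRing.Theory.
Local Open Scope ring_scope.

(* Vertices of the zero-divisor graph: nonzero zero-divisors Z(R)^*. *)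
Definition zdstar (R : comPzRingType) (x : R) : Prop :=
  x != 0 /\ exists y : R, y != 0 /\ x * y = 0.

(* Adjacency in Gamma(R): r ~ s iff r s = 0 (for r = s this is the loop r^2 = 0). *)
Definition zd_adj (R : comPzRingType) (x y : R) : Prop := x * y = 0.

(* Finite vertex sets are represented by duplicate-free sequences. *)
Definition dominating (R : comPzRingType) (X : seq R) : Prop :=
  (forall x, x \in X -> zdstar x) /\
  (forall v, zdstar v -> v \notin X -> exists2 x, x \in X & zd_adj v x).

Definition total_dominating (R : comPzRingType) (X : seq R) : Prop :=
  (forall x, x \in X -> zdstar x) /\
  (forall v, zdstar v -> exists2 x, x \in X & zd_adj v x).

(* gamma(Gamma(R)) = n : a dominating set of size n exists and every
   (finite) dominating set has at least n elements (infinite ones trivially do). *)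
Definition domination_number_eq (R : comPzRingType) (n : nat) : Prop :=
  (exists X : seq R, [/\ uniq X, size X = n & dominating X]) /\
  (forall X : seq R, uniq X -> dominating X -> (n <= size X)%N).

Definition total_domination_number_eq (R : comPzRingType) (n : nat) : Prop :=
  (exists X : seq R, [/\ uniq X, size X = n & total_dominating X]) /\
  (forall X : seq R, uniq X -> total_dominating X -> (n <= size X)%N).

(* Main.v *)
Require Import Defs.
From mathcomp Require Import all_boot all_algebra.
Import GRing.Theory.
Local Open Scope ring_scope.

Lemma total_small (R : comPzRingType)
  (H : forall X : seq R, uniq X -> total_dominating X -> (3 <= size X)%N)
  (X : seq R) : total_dominating X -> (3 <= size X)%N.
Proof.
move=> [H1 H2].
have h := H (undup X) (undup_uniq X).
apply: leq_trans (size_undup X); apply: h; split.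
- by move=> x; rewrite mem_undup; apply: H1.
- move=> v hv; case: (H2 v hv) => x hx hvx; exists x => //; by rewrite mem_undup.
Qed.

Lemma two_total (R : comPzRingType) (x y : R) :
  zdstar x -> zdstar y ->
  (forall v, zdstar v -> v * x = 0 \/ v * y = 0) ->
  total_dominating [:: x; y].
Proof.
move=> hx hy hv; split.
- by move=> z; rewrite !inE => /orP [/eqP -> | /eqP ->].
- move=> v /hv [h|h]; [exists x | exists y]; rewrite ?inE ?eqxx ?orbT //.
Qed.

Theorem proposition4p1 (R : comPzRingType) :
  total_domination_number_eq R 3 -> domination_number_eq R 3.
Proof.
move=> [[T [uT sT [T1 T2]]] Hmin].
have Hs := @total_small R Hmin.
split.
  exists T; split => //; split => // v hv _; exact: T2.
move=> X uX [X1 X2].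
case: X uX X1 X2 => [|a [|b [|c X]]] //= uX X1 X2.
-
  case: T sT T1 {T2 uT} => [|t T] // _ T1.
  have ht := T1 t (mem_head _ _).
  by case: (X2 t ht).
-
  have ha := X1 a (mem_head _ _).
  have [y [y0 ay]] := ha.2.
  have hy : zdstar y by split => //; exists a; split; [exact: ha.1 | by rewrite mulrC].
  suff /Hs : total_dominating [:: a; y] by []; apply: two_total => // v hv.
  case: (eqVneq v a) => [->|va]; first by right.
  left; have /(X2 v hv) [x] : v \notin [:: a] by rewrite inE.
  by rewrite inE => /eqP ->.
-
  have ha := X1 a (mem_head _ _).
  have hb : zdstar b by apply: X1; rewrite !inE eqxx orbT.
  have [c [c0 ac]] := ha.2.
  have [d [d0 bd]] := hb.2.
  have hc : zdstar c by split => //; exists a; split; [exact: ha.1 | by rewrite mulrC].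
  have hd : zdstar d by split => //; exists b; split; [exact: hb.1 | by rewrite mulrC].
  have F : forall v, zdstar v -> v != a -> v != b -> v * (a * b) = 0.
    move=> v hv va vb.
    have /(X2 v hv) [x] : v \notin [:: a; b] by rewrite !inE negb_or va vb.
    rewrite /zd_adj !inE => /orP [/eqP ->|/eqP ->] h.
      by rewrite mulrA h mul0r.
    by rewrite mulrCA h mulr0.
  case: (eqVneq (a * b) 0) => [ab0|ab0].
    suff /Hs : total_dominating [:: a; b] by []; apply: two_total => // v hv.
    case: (eqVneq v a) => [->|va]; first by right.
    case: (eqVneq v b) => [->|vb]; first by left; rewrite mulrC.
    have /(X2 v hv) [x] : v \notin [:: a; b] by rewrite !inE negb_or va vb.
    by rewrite /zd_adj !inE => /orP [/eqP ->|/eqP ->] h; [left|right].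
  have hab : zdstar (a * b).
    by split => //; exists c; split => //; rewrite mulrAC ac mul0r.
  have key : (a * (a * b) = 0 \/ a * d = 0) \/ (b * (a * b) = 0 \/ b * c = 0).
    case: (eqVneq (a * b) a) => [e|ea].
      by left; right; rewrite -e -mulrA bd mulr0.
    case: (eqVneq (a * b) b) => [e|eb].
      by right; right; rewrite -e mulrAC ac mul0r.
    have /(X2 (a * b) hab) [x] : a * b \notin [:: a; b] by rewrite !inE negb_or ea eb.
    rewrite /zd_adj !inE => /orP [/eqP ->|/eqP ->] h.
      by left; left; rewrite mulrC.
    by right; left; rewrite mulrC.
  case: key => [ka|kb].
    suff /Hs : total_dominating [:: a * b; d] by []; apply: two_total => // v hv.
    case: (eqVneq v a) => [->|va].
      by case: ka; [left|right].
    case: (eqVneq v b) => [->|vb]; first by right.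
    by left; apply: F.
  suff /Hs : total_dominating [:: a * b; c] by []; apply: two_total => // v hv.
  case: (eqVneq v a) => [->|va]; first by right.
  case: (eqVneq v b) => [->|vb].
    by case: kb; [left|right].
  by left; apply: F.
Qed.
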